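(* Let $\mathcal C\subseteq\mathbf F_q^n$ be a formally self-orthogonal linear $[n,k,d]$ code. Then for each $1\le i\le n$, either $\mathcal P_i=\{(c,0):c\in\mathcal P_{i-1}\}$ or $\mathcal F_{i-1}=\{(0,c):c\in\mathcal F_i\}$. Equivalently, $\dim\mathcal P_{i-1}=\dim\mathcal P_i$ or $\dim\mathcal F_{i-1}=\dim\mathcal F_i$.
   Context: The coordinate order is fixed. Define $\mathcal P_0=\mathcal F_n=0$, $\mathcal P_n=\mathcal F_0=\mathcal C$, and for $1\le i\le n-1$, $\mathcal P_i=\{(c_1,\dots,c_i):(c_1,\dots,c_i,0,\dots,0)\in\mathcal C\}\subseteq\mathbf F_q^i$ and $\mathcal F_i=\{(c_{i+1},\dots,c_n):(0,\dots,0,c_{i+1},\dots,c_n)\in\mathcal C\}\subseteq\mathbf F_q^{n-i}$. A code $\mathcal C$ is formally self-orthogonal if there is an $n$-tuple $\mathbf x$ of nonzero elements of $\mathbf F_q$ with $\mathcal C\subseteq\mathbf x*\mathcal C^\perp$, where $*$ is coordinate-wise multiplication and $\mathcal C^\perp$ is the dual code under the standard inner product. *)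

(* Defs.v *)
From HB Require Import structures.
From mathcomp Require Import all_boot all_order all_algebra all_field.
Set Implicit Arguments. Unset Strict Implicit. Unset Printing Implicit Defensive.
Import GRing.Theory.
Local Open Scope ring_scope.

Section Codes.
Variable F : finFieldType.

(* padR m k c : the vector (c, 0, ..., 0) in F^k, for c in F^m (m <= k). *)
Definition padR (m k : nat) (c : 'rV[F]_m) : 'rV[F]_k :=
  \row_(j < k) oapp (fun t : 'I_m => c ord0 t) 0 (insub (val j)).

(* padL s m k c : the vector (0, ..., 0, c) in F^k with s leading zeros. *)
Definition padL (s m k : nat) (c : 'rV[F]_m) : 'rV[F]_k :=
  \row_(j < k) if (s <= val j)%N
               then oapp (fun t : 'I_m => c ord0 t) 0 (insub (val j - s)%N)
               else 0.

(* P_i = {(c_1..c_i) : (c_1..c_i,0..0) in C}  (a subset of F^i) *)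
Definition Pcode (n : nat) (C : {vspace 'rV[F]_n}) (i : nat) : {set 'rV[F]_i} :=
  [set c : 'rV[F]_i | padR n c \in C].

(* F_i = {(c_{i+1}..c_n) : (0..0,c_{i+1}..c_n) in C}  (a subset of F^(n-i)) *)
Definition Fcode (n : nat) (C : {vspace 'rV[F]_n}) (i : nat) : {set 'rV[F]_(n - i)} :=
  [set c : 'rV[F]_(n - i) | padL i n c \in C].

Definition dotv (n : nat) (u v : 'rV[F]_n) : F := \sum_(j < n) u ord0 j * v ord0 j.

Definition dual_code (n : nat) (C : {vspace 'rV[F]_n}) : {set 'rV[F]_n} :=
  [set y : 'rV[F]_n | [forall c : 'rV[F]_n, (c \in C) ==> (dotv c y == 0)]].

Definition cwmul (n : nat) (x y : 'rV[F]_n) : 'rV[F]_n := \row_(j < n) (x ord0 j * y ord0 j).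

Definition formally_self_orthogonal (n : nat) (C : {vspace 'rV[F]_n}) : Prop :=
  exists x : 'rV[F]_n, (forall j, x ord0 j != 0) /\
    (forall c, c \in C -> exists2 y, y \in dual_code C & c = cwmul x y).

End Codes.

(* Main.v *)
Require Import Defs.
From HB Require Import structures.
From mathcomp Require Import all_boot all_order all_algebra all_field.
From mathcomp Require Import zify.
Import GRing.Theory.
Local Open Scope ring_scope.

Section H.
Set Implicit Arguments.
Variable F : finFieldType.

Definition fv (m : nat) (c : 'rV[F]_m) (j : nat) : F :=
  oapp (fun t : 'I_m => c ord0 t) 0 (insub j).

Lemma fE m (c : 'rV[F]_m) (t : 'I_m) : fv c t = c ord0 t.
Proof. by rewrite /fv valK. Qed.

Lemma f_out m (c : 'rV[F]_m) j : (m <= j)%N -> fv c j = 0.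
Proof. by move=> h; rewrite /fv insubF // ltnNge h. Qed.

Lemma row_eq m (c c' : 'rV[F]_m) : (forall j, fv c j = fv c' j) -> c = c'.
Proof. by move=> h; apply/rowP => t; rewrite -!fE. Qed.

Lemma frow m (g : nat -> F) j :
  fv (\row_(t < m) g (val t)) j = if (j < m)%N then g j else 0.
Proof.
case: (ltnP j m) => h; last by rewrite f_out.
by rewrite -[j]/(val (Ordinal h)) fE mxE.
Qed.

Lemma fpadR l k (c : 'rV[F]_l) j :
  fv (padR k c) j = if (j < k)%N then fv c j else 0.
Proof. exact: (@frow k (fv c) j). Qed.

Lemma fpadL s l k (c : 'rV[F]_l) j :
  fv (padL s k c) j = if (j < k)%N then (if (s <= j)%N then fv c (j - s) else 0) else 0.
Proof. exact: (@frow k (fun j => if (s <= j)%N then fv c (j - s) else 0) j). Qed.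

Lemma padRR l m k (c : 'rV[F]_l) : (l <= m)%N -> padR k (padR m c) = padR k c.
Proof.
move=> h; apply: row_eq => j; rewrite !fpadR.
case: (ltnP j k) => // _; case: (ltnP j m) => // hj.
by rewrite f_out //; apply: leq_trans h hj.
Qed.

Lemma padLL a b l m k (c : 'rV[F]_l) s : (b + l <= m)%N -> s = (a + b)%N ->
  padL a k (padL b m c) = padL s k c.
Proof.
move=> h ->; apply: row_eq => j; rewrite !fpadL.
case: (ltnP j k) => // _.
case: (leqP a j) => ha; last by case: ifP => // ?; exfalso; lia.
case: (leqP (a + b) j) => hab.
  have -> : (b <= j - a)%N = true by lia.
  rewrite -subnDA; case: (ltnP (j - a) m) => // hm.
  by rewrite f_out //; lia.
have -> : (b <= j - a)%N = false by lia.
by case: ifP.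
Qed.

End H.
Unset Implicit Arguments.
Arguments fv {F m}.
Arguments fE {F m}.
Arguments f_out {F m}.
Arguments row_eq {F m}.
Arguments frow {F m}.
Arguments fpadR {F l}.
Arguments fpadL {F} s {l}.
Arguments padRR {F l m}.

Theorem proposition4p2 (F : finFieldType) (n : nat) (C : {vspace 'rV[F]_n}) :
  formally_self_orthogonal C ->
  forall i : nat, (1 <= i <= n)%N ->
    Pcode C i = [set padR i c | c in Pcode C i.-1] \/
    Fcode C i.-1 = [set padL 1 (n - i.-1) c | c in Fcode C i].
Proof.
move=> [x [hx hC]] i /andP [hi1 hin].
case: (pickP [pred c : 'rV[F]_i | (c \in Pcode C i) && (fv c i.-1 != 0)]) => [c /andP [cP cnz] | HP]; last first.
  left; apply/setP => c; apply/idP/imsetP.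
  - move=> cP.
    have c0 : fv c i.-1 = 0.
      by move: (HP c) => /= /negbT; rewrite cP /= negbK => /eqP.
    have Hc : padR i (padR i.-1 c) = c.
      apply: row_eq => j; rewrite !fpadR.
      case: (ltnP j i) => hj; last by rewrite f_out.
      case: (ltnP j i.-1) => // hj'.
      by have -> : j = i.-1 by lia.
    exists (padR i.-1 c) => //.
    rewrite inE -(padRR n (padR i.-1 c) (leq_pred i)) Hc.
    by move: cP; rewrite inE.
  - move=> [c' cP ->]; rewrite inE padRR ?leq_pred //.
    by move: cP; rewrite inE.
case: (pickP [pred d : 'rV[F]_(n - i.-1) | (d \in Fcode C i.-1) && (fv d 0 != 0)]) => [d /andP [dP dnz] | HF]; last first.
  right; apply/setP => d; apply/idP/imsetP.
  - move=> dP.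
    have d0 : fv d 0 = 0.
      by move: (HF d) => /= /negbT; rewrite dP /= negbK => /eqP.
    pose d' : 'rV[F]_(n - i) := \row_(t < n - i) fv d (val t).+1.
    have Hd : padL 1 (n - i.-1) d' = d.
      apply: row_eq => j; rewrite fpadL.
      case: (ltnP j (n - i.-1)) => hj; last by rewrite f_out.
      case: (leqP 1 j) => hj1.
        rewrite /d' (frow (fun k => fv d k.+1)); case: ifP => h.
          by congr fv; lia.
        by rewrite f_out //; lia.
      by have -> : j = 0%N by lia.
    exists d' => //.
    rewrite inE -(@padLL F i.-1 1 (n - i) (n - i.-1) n d' i); first last.
    + lia.
    + lia.
    by rewrite Hd; move: dP; rewrite inE.
  - move=> [d' dP ->]; rewrite inE (@padLL F i.-1 1 (n - i) (n - i.-1) n d' i); first last.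
    + lia.
    + lia.
    by move: dP; rewrite inE.
exfalso.
have uC : padR n c \in C by move: cP; rewrite inE.
have vC : padL i.-1 n d \in C by move: dP; rewrite inE.
have [y yd uy] := hC _ uC.
move: yd; rewrite inE => /forallP /(_ (padL i.-1 n d)); rewrite vC /= => /eqP.
have hk : (i.-1 < n)%N by lia.
have uE : forall j : 'I_n, fv c j = x ord0 j * y ord0 j.
  by move=> j; have := fpadR n c j; rewrite ltn_ord fE => <-; rewrite uy mxE.
rewrite /dotv (bigD1 (Ordinal hk)) //= big1 ?addr0.
  apply/eqP; apply: mulf_neq0.
    by rewrite -fE fpadL hk leqnn subnn.
  apply/eqP => y0; move: cnz; rewrite (uE (Ordinal hk)) /= y0 mulr0 eqxx.
  by [].
move=> j /eqP /val_eqP /= hj.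
case: (ltnP j i.-1) => hj'.
  by rewrite -fE fpadL ltn_ord leqNgt hj' mul0r.
have : fv c j = 0 by rewrite f_out //; lia.
rewrite uE => /eqP; rewrite mulf_eq0 (negbTE (hx j)) /= => /eqP ->.
by rewrite mulr0.
Qed.
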